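(* For every $n\ge 0$, the number $b(n)$ of non-squashing partitions of $n$ into distinct parts equals the number of partitions of $n$ into powers of $2$ such that either all parts are equal to $1$, or the largest part is $2^i>1$ and there is at least one part equal to $2^{i-1}$.
   Context: A partition $n=p_1+\cdots+p_k$ with $1\le p_1\le\cdots\le p_k$ is non-squashing if $p_1+\cdots+p_j\le p_{j+1}$ for all $1\le j\le k-1$. The empty partition of $0$ counts (vacuously) in both families. *)

(* Defs.v *)
From mathcomp Require Import all_boot.
Set Implicit Arguments. Unset Strict Implicit. Unset Printing Implicit Defensive.

Definition is_partition (n : nat) (s : seq nat) : bool :=
  [&& sorted leq s, all (fun p => 0 < p) s & sumn s == n].

(* Non-squashing: p_1 + ... + p_j <= p_{j+1} for all 1 <= j <= k-1
   (0-based: sumn (take j s) <= nth 0 s j for 1 <= j < size s). *)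
Definition non_squashing (s : seq nat) : bool :=
  all (fun j => sumn (take j s) <= nth 0 s j) (iota 1 (size s).-1).

Definition ns_distinct (n : nat) (s : seq nat) : bool :=
  [&& is_partition n s, uniq s & non_squashing s].

Definition is_pow2 (x : nat) : bool := has (fun i => x == 2 ^ i) (iota 0 x.+1).

Definition pow2_special (n : nat) (s : seq nat) : bool :=
  [&& is_partition n s, all is_pow2 s &
      all (fun p => p == 1) s ||
      has (fun i => (last 0 s == 2 ^ i.+1) && (2 ^ i \in s)) (iota 0 n)].

Fixpoint all_seqs (k m : nat) : seq (seq nat) :=
  if k is k'.+1 then [seq x :: t | x <- iota 0 m, t <- all_seqs k' m]
  else [:: [::]].

(* A duplicate-free finite list containing every partition of n
   (parts are <= n and there are at most n of them). *)
Definition candidates (n : nat) : seq (seq nat) :=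
  flatten [seq all_seqs k n.+1 | k <- iota 0 n.+1].

Definition num_partitions (P : nat -> seq nat -> bool) (n : nat) : nat :=
  count (P n) (candidates n).

Definition b (n : nat) : nat := num_partitions ns_distinct n.

(* Main.v *)
Require Import Defs.
From mathcomp Require Import all_boot zify.

Lemma mem_all_seqs k m s :
  (s \in all_seqs k m) = (size s == k) && all (fun x => x < m) s.
Proof.
elim: k s => [|k IH] [|x s] //=.
  by apply/allpairsPdep => -[y [t [_ _]]].
apply/allpairsPdep/andP.
  move=> [y [t [Hy Ht [-> ->]]]]; move: Ht; rewrite IH => /andP[/eqP -> ->].
  by rewrite mem_iota /= add0n in Hy; split => //; rewrite Hy.
move=> [Hs /andP[Hx Ha]]; exists x, s; split => //.
  by rewrite mem_iota /= add0n.
by rewrite IH -eqSS Hs.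
Qed.

Lemma uniq_all_seqs k m : uniq (all_seqs k m).
Proof.
elim: k => [|k IH] //=.
apply: (@allpairs_uniq _ _ _ (fun x t => x :: t)) => //; first exact: iota_uniq.
by move=> [x s] [y t] _ _ /= [-> ->].
Qed.

Lemma uniq_flatten_key (S T : eqType) (h : T -> S) (F : S -> seq T) (ks : seq S) :
  uniq ks -> (forall k, uniq (F k)) -> (forall k x, x \in F k -> h x = k) ->
  uniq (flatten [seq F k | k <- ks]).
Proof.
move=> Uk UF HF; elim: ks Uk => [|k ks IH] //= /andP[kn Uk].
rewrite cat_uniq UF IH // andbT.
apply/hasP => -[x /flatten_mapP [k' k'in xin] xk].
by move: kn; rewrite -(HF _ _ xk) (HF _ _ xin) k'in.
Qed.

Lemma uniq_candidates n : uniq (candidates n).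
Proof.
apply: (@uniq_flatten_key _ _ size) => //; first exact: iota_uniq.
  by move=> k; apply: uniq_all_seqs.
by move=> k x; rewrite mem_all_seqs => /andP[/eqP].
Qed.

Lemma mem_candidates n s :
  (s \in candidates n) = (size s <= n) && all (fun x => x < n.+1) s.
Proof.
apply/flatten_mapP/andP.
  move=> [k]; rewrite mem_iota /= add0n ltnS => Hk.
  by rewrite mem_all_seqs => /andP[/eqP -> ->].
move=> [Hs Ha]; exists (size s); first by rewrite mem_iota.
by rewrite mem_all_seqs eqxx.
Qed.

Lemma mem_le_sumn x s : x \in s -> x <= sumn s.
Proof.
elim: s => [|y s IH] //=; rewrite in_cons => /orP[/eqP ->|/IH]; lia.
Qed.

Lemma size_le_sumn s : all (fun p => 0 < p) s -> size s <= sumn s.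
Proof. elim: s => [|y s IH] //= /andP[Hy /IH]; lia. Qed.

Lemma partition_cand n s : is_partition n s -> s \in candidates n.
Proof.
move=> /and3P[_ Hp /eqP Hn]; rewrite mem_candidates -Hn size_le_sumn //=.
by apply/allP => x /mem_le_sumn; rewrite ltnS.
Qed.

Lemma count_bij (A B : eqType) (l1 : seq A) (l2 : seq B) (P : pred A) (Q : pred B)
  (f : A -> B) :
  uniq l1 -> uniq l2 ->
  (forall x y, x \in l1 -> y \in l1 -> P x -> P y -> f x = f y -> x = y) ->
  (forall x, x \in l1 -> P x -> (f x \in l2) && Q (f x)) ->
  (forall y, y \in l2 -> Q y -> exists2 x, (x \in l1) && P x & y = f x) ->
  count P l1 = count Q l2.
Proof.
move=> U1 U2 Hinj Hf Hs; rewrite -!size_filter.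
have Hp : perm_eq (map f (filter P l1)) (filter Q l2).
  apply: uniq_perm; last first.
  - move=> y; rewrite mem_filter; apply/mapP/andP.
      by move=> [x]; rewrite mem_filter => /andP[Px xin] ->; have /andP[] := Hf x xin Px.
    by move=> [Qy yin]; have [x /andP[xin Px] ->] := Hs _ yin Qy; exists x; rewrite ?mem_filter ?Px.
  - by apply: filter_uniq.
  rewrite map_inj_in_uniq ?filter_uniq // => x y; rewrite !mem_filter.
  by move=> /andP[Px xin] /andP[Py yin]; apply: Hinj.
by rewrite -(perm_size Hp) size_map.
Qed.

Lemma count_excl (T : eqType) (a : pred T) (e : T) l : uniq l ->
  count (fun x => a x && (x != e)) l = count a l - (a e && (e \in l)).
Proof.
elim: l => [|x l IH] //=; rewrite ?andbF // => /andP[xn U].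
rewrite IH // in_cons; case: (eqVneq x e) xn => [->|ne] xn /=.
  rewrite (negbTE xn) andbF andbT add0n.
  by case: (a e); rewrite /= ?subn0 ?add1n ?subn1.
rewrite andbT.
case ae: (a e) => //=; case ein: (e \in l) => /=; rewrite ?subn0 //.
have : 0 < count a l by rewrite -has_count; apply/hasP; exists e.
lia.
Qed.

Lemma sorted_rcons_leq r p : sorted leq (rcons r p) = sorted leq r && (last 0 r <= p).
Proof. by case: r => [|x r] //=; rewrite rcons_path. Qed.

Lemma ns_rcons r p :
  non_squashing (rcons r p) = non_squashing r && ((r == [::]) || (sumn r <= p)).
Proof.
rewrite /non_squashing size_rcons /=.
case: (eqVneq r [::]) => [->//|rn] /=.
have sr : 0 < size r by rewrite lt0n size_eq0.
rewrite {1}(_ : size r = (size r).-1 + 1); last by lia.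
rewrite iotaD all_cat /= andbT (_ : 1 + (size r).-1 = size r); last by lia.
congr andb.
  apply: eq_in_all => j; rewrite mem_iota => /andP[H1 H2].
  rewrite -cats1 takel_cat; last by lia.
  rewrite nth_cat; case: ifP => // /negbT; lia.
by rewrite -cats1 take_size_cat // nth_cat ltnn subnn.
Qed.

Lemma sing r x : all (fun p => 0 < p) r -> x \in r -> x = sumn r -> r = [:: x].
Proof.
case: r => [|y r] //= /andP[Hy Hr]; rewrite in_cons => /orP[/eqP ->|xin] Hs.
  case: r Hr Hs => [|z r] //= /andP[Hz _]; lia.
have := mem_le_sumn _ _ xin; lia.
Qed.

Lemma last_le_sumn r : last 0 r <= sumn r.
Proof. case: r => [|x r] //; apply: mem_le_sumn; exact: mem_last. Qed.

Lemma ns_fwd n m r : 0 < n -> m.*2 <= n -> ns_distinct m r ->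
  (m.*2 != n) || (r != [:: m]) -> ns_distinct n (rcons r (n - m)).
Proof.
move=> n0 mn /and3P[/and3P[Hs Hp /eqP Hm] Hu Hns] Hex.
have mp : m <= n - m by lia.
apply/and3P; split.
- apply/and3P; split.
  + by rewrite sorted_rcons_leq Hs /=; apply: leq_trans (last_le_sumn r) _; rewrite Hm.
  + rewrite all_rcons Hp andbT; lia.
  + by rewrite sumn_rcons Hm; apply/eqP; lia.
- rewrite rcons_uniq Hu andbT; apply/negP => pin.
  have := mem_le_sumn _ _ pin; rewrite Hm => le.
  have E : n - m = m by lia.
  rewrite E in pin; have := sing _ _ Hp pin (esym Hm) => Er.
  by move: Hex; rewrite Er eqxx orbF; apply/negP; apply/eqP; lia.
- by rewrite ns_rcons Hns Hm mp orbT.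
Qed.

Lemma ns_bwd n s : 0 < n -> ns_distinct n s ->
  exists2 r, [&& (sumn r).*2 <= n, ns_distinct (sumn r) r &
                ((sumn r).*2 != n) || (r != [:: sumn r])]
        & s = rcons r (n - sumn r).
Proof.
move=> n0; case/lastP: s => [|r p].
  by move=> /and3P[/and3P[_ _ /eqP Hn] _ _]; move: Hn n0 => /= <-.
move=> /and3P[/and3P[Hs Hp /eqP Hn] Hu Hns].
move: Hs Hp Hn Hu Hns; rewrite sorted_rcons_leq all_rcons sumn_rcons rcons_uniq ns_rcons.
move=> /andP[Hs Hl] /andP[p0 Hp] Hn /andP[pn Hu] /andP[Hns Hsq].
have mp : sumn r <= p by case: (r) Hsq => //= x r' /orP[].
exists r; last by congr rcons; lia.
apply/and3P; split; first by lia.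
  by rewrite /ns_distinct /is_partition Hs Hp eqxx Hu Hns.
rewrite -negb_and; apply/negP => /andP[/eqP E /eqP Er].
have pE : p = sumn r by lia.
by move: pn; rewrite pE {2}Er in_cons eqxx.
Qed.

Definition sp (s : seq nat) : bool :=
  all (fun p => p == 1) s || ((1 < last 0 s) && ((last 0 s)./2 \in s)).

Lemma pow2P x : reflect (exists i, x = 2 ^ i) (is_pow2 x).
Proof.
apply: (iffP hasP) => [[i _ /eqP ->]|[i ->]]; first by exists i.
exists i => //; rewrite mem_iota /= add0n ltnS; apply: ltnW; exact: ltn_expl.
Qed.

Lemma pow2_double x : is_pow2 x.*2 = is_pow2 x.
Proof.
apply/pow2P/pow2P => -[i Hi].
  case: i Hi => [|i]; first by rewrite expn0 => /(congr1 odd); rewrite odd_double.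
  by rewrite expnS mul2n => /double_inj ->; exists i.
by exists i.+1; rewrite Hi expnS mul2n.
Qed.

Lemma pow2_even x : is_pow2 x -> 1 < x -> ~~ odd x.
Proof. by case/pow2P => [[|i] ->] //; rewrite oddX. Qed.

Lemma sorted_le_last s x : sorted leq s -> x \in s -> x <= last 0 s.
Proof.
case: s => [|y s] //=; elim: s y x => [|z s IH] y x /=; first by rewrite inE => _ /eqP ->.
move=> /andP[yz Hp]; rewrite in_cons => /orP[/eqP ->|xin].
  by apply: leq_trans yz _; apply: IH => //; apply: mem_head.
exact: IH.
Qed.

Lemma pow2_specialE n s :
  pow2_special n s = [&& is_partition n s, all is_pow2 s & sp s].
Proof.
rewrite /pow2_special /sp; case Hp: is_partition => //=; case Ha: all => //=.
congr orb; apply/hasP/andP.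
  move=> [i _ /andP[/eqP E H]]; rewrite E expnS mul2n doubleK; split => //.
  have := expn_gt0 2 i; lia.
move=> [H1 H2]; case: s Hp Ha H1 H2 => [|y s] // Hp Ha H1 H2.
have Lin : last 0 (y :: s) \in y :: s by apply: mem_last.
have /pow2P [[|i] Ei] := allP Ha _ Lin; first by move: H1; rewrite Ei.
exists i.
  rewrite mem_iota /= add0n.
  have := ltn_expl i (isT : 1 < 2); have := mem_le_sumn _ _ Lin.
  move: Hp => /and3P[_ _ /eqP ->]; rewrite Ei expnS; lia.
by rewrite Ei eqxx /=; move: H2; rewrite Ei expnS mul2n doubleK.
Qed.

Lemma path1 l : all (fun p => 0 < p) l -> path leq 1 l = sorted leq l.
Proof. by case: l => //= y l /andP[Hy _]; rewrite Hy. Qed.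

Lemma nseq_sorted k u : all (fun p => 0 < p) u ->
  sorted leq (nseq k 1 ++ u) = sorted leq u.
Proof.
move=> Hu; elim: k => [|k IH] //=.
by rewrite path1 // all_cat Hu andbT; apply/allP => x; rewrite mem_nseq => /andP[_ /eqP ->].
Qed.

Lemma sorted_double t : sorted leq (map double t) = sorted leq t.
Proof.
rewrite sorted_map; case: t => //= x t; apply: eq_path => a c /=; exact: leq_double.
Qed.

Lemma sumn_double t : sumn (map double t) = (sumn t).*2.
Proof. by elim: t => //= x t ->; rewrite doubleD. Qed.

Lemma part_f k t : let s := nseq k 1 ++ map double t in
  is_partition (k + (sumn t).*2) s = is_partition (sumn t) t.
Proof.
move=> s; rewrite /is_partition.
have Ep : all (fun p => 0 < p) s = all (fun p => 0 < p) t.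
  rewrite /s all_cat all_map; have -> : all (fun p => 0 < p) (nseq k 1) by rewrite all_nseq orbT.
  by apply: eq_all => x /=; rewrite double_gt0.
rewrite Ep /s sumn_cat sumn_nseq sumn_double mul1n !eqxx !andbT.
case Ht: (all _ t); rewrite ?andbF // nseq_sorted ?sorted_double //.
by rewrite all_map; apply: sub_all Ht => x /=; rewrite double_gt0.
Qed.

Lemma pow2_f k t : all is_pow2 (nseq k 1 ++ map double t) = all is_pow2 t.
Proof.
rewrite all_cat all_nseq /= orbT /= all_map; apply: eq_all => x /=; exact: pow2_double.
Qed.

Lemma ones t : all (fun p => p == 1) t -> t = nseq (sumn t) 1.
Proof. by elim: t => //= x t IH /andP[/eqP -> /IH {1}->]. Qed.

Lemma ones_eq m t : is_partition m t -> (t == nseq m 1) = all (fun p => p == 1) t.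
Proof.
move=> /and3P[_ _ /eqP Hm]; apply/eqP/idP => [->|/ones]; first by rewrite all_nseq eqxx orbT.
by rewrite Hm.
Qed.

Lemma sp_f k t : 0 < k + (sumn t).*2 -> is_partition (sumn t) t -> all is_pow2 t ->
  sp (nseq k 1 ++ map double t) = sp t && ~~ ((k == 0) && (t == nseq (sumn t) 1)).
Proof.
move=> n0 Hpt Ha; rewrite ones_eq //.
case: t n0 Hpt Ha => [|y t'] n0 Hpt Ha.
  by rewrite /sp cats0 /= all_nseq eqxx orbT /=; move: n0 => /=; case: k.
set t := y :: t' in Hpt Ha *.
have Ls : last 0 (nseq k 1 ++ map double t) = (last y t').*2.
  by rewrite last_cat /= last_map.
set L := last y t' in Ls.
have Lin : L \in t by apply: mem_last.
move: (Hpt) => /and3P[Hs Hpos _].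
have L0 : 0 < L by apply: (allP Hpos).
have Ao : all (fun p => p == 1) (nseq k 1 ++ map double t) = false.
  apply/negbTE/negP => /allP /(_ L.*2); rewrite mem_cat map_f // orbT => /(_ isT) /eqP.
  by move/(congr1 odd); rewrite odd_double.
rewrite /sp Ao Ls doubleK orFb (_ : 1 < L.*2); last by rewrite -addnn; lia.
rewrite mem_cat mem_nseq andTb (_ : last 0 t = L) //.
have LE : forall x, x \in t -> x <= L by move=> x xin; exact: (sorted_le_last _ _ Hs xin).
case: (eqVneq L 1) => [L1|L1].
  have -> : all (fun p => p == 1) t.
    apply/allP => x xin; have := LE x xin; rewrite L1.
    have := allP Hpos _ xin; rewrite eqn_leq => -> ->; by [].
  have -> : (L \in map double t) = false.
    by apply/negbTE/mapP => -[x _]; rewrite L1 => /(congr1 odd); rewrite odd_double.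
  by rewrite andbT orbF /= andbT; case: k {n0 Ao Ls}.
have -> : all (fun p => p == 1) t = false.
  by apply/negbTE/negP => /allP /(_ L Lin); rewrite (negbTE L1).
have Le : L = (L./2).*2 by rewrite even_halfK // pow2_even ?(allP Ha) //; lia.
rewrite {1}Le mem_map; last exact: double_inj.
rewrite andbF /= andbF andbT (_ : 1 < L) //; lia.
Qed.

Lemma dec1 s : sorted leq s -> all (fun p => 0 < p) s ->
  s = nseq (count_mem 1 s) 1 ++ filter (fun x => 1 < x) s.
Proof.
elim: s => [|x s IH] //= Hs /andP[x0 Ha].
have Hs' : sorted leq s by apply: path_sorted Hs.
case: (eqVneq x 1) => [->|x1] /=.
  by rewrite add0n {1}(IH Hs' Ha).
have x2 : 1 < x by lia.
rewrite x2 add0n.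
have Hm := order_path_min leq_trans Hs.
have -> : count_mem 1 s = 0.
  apply/eqP; rewrite -leqn0 leqNgt -has_count; apply/hasP => -[y yin /eqP yE].
  by have := allP Hm _ yin; rewrite yE; lia.
congr cons; apply/esym/all_filterP/allP => y yin; have := allP Hm _ yin; lia.
Qed.

Lemma dec s : sorted leq s -> all (fun p => 0 < p) s -> all is_pow2 s ->
  s = nseq (count_mem 1 s) 1 ++ map double (map half (filter (fun x => 1 < x) s)).
Proof.
move=> Hs Hp Ha; rewrite {1}(dec1 _ Hs Hp); congr cat.
rewrite -map_comp map_id_in // => x; rewrite mem_filter => /andP[x1 xin] /=.
by rewrite even_halfK // pow2_even // (allP Ha).
Qed.

Definition PL n := flatten [seq [seq (m, r) | r <- candidates m] | m <- iota 0 (n./2).+1].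

Lemma memPL n x : (x \in PL n) = (x.1.*2 <= n) && (x.2 \in candidates x.1).
Proof.
case: x => m r /=; apply/flatten_mapP/andP.
  move=> [m']; rewrite mem_iota leq0n andTb add0n ltnS geq_half_double => Hm.
  by case/mapP => r' Hr' [-> ->].
move=> [Hm Hr]; exists m; first by rewrite mem_iota leq0n andTb add0n ltnS geq_half_double.
by apply/mapP; exists r.
Qed.

Lemma uniqPL n : uniq (PL n).
Proof.
apply: (@uniq_flatten_key _ _ fst); first exact: iota_uniq.
  by move=> k; rewrite map_inj_uniq ?uniq_candidates // => a c [].
by move=> k x; case/mapP => r _ ->.
Qed.

Lemma countPL n (P : nat -> seq nat -> bool) :
  count (fun x => P x.1 x.2) (PL n) =
  sumn [seq count (P m) (candidates m) | m <- iota 0 (n./2).+1].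
Proof.
rewrite /PL count_flatten -map_comp; congr sumn; apply: eq_map => m /=.
by rewrite count_map.
Qed.

Lemma b_rec n : 0 < n -> b n =
  sumn [seq count (fun r => ns_distinct m r && ((m.*2 != n) || (r != [:: m])))
          (candidates m) | m <- iota 0 (n./2).+1].
Proof.
move=> n0; rewrite -(countPL n (fun m r => ns_distinct m r && ((m.*2 != n) || (r != [:: m])))).
symmetry; apply: (@count_bij _ _ _ _ _ _ (fun x => rcons x.2 (n - x.1))).
- exact: uniqPL.
- exact: uniq_candidates.
- move=> [m r] [m' r']; rewrite !memPL /= => /andP[Hm _] /andP[Hm' _] _ _ /rcons_inj [-> E].
  congr pair; lia.
- move=> [m r]; rewrite memPL /= => /andP[Hm _] /andP[Hns Hex].
  have H := ns_fwd _ _ _ n0 Hm Hns Hex; rewrite H partition_cand //; by case/and3P: H.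
- move=> s _ Hs; have [r /and3P[H1 H2 H3] ->] := ns_bwd _ _ n0 Hs.
  exists (sumn r, r) => //; rewrite memPL /= H1 H2 H3 partition_cand //; by case/and3P: H2.
Qed.

Lemma spec_f k t : 0 < k + (sumn t).*2 ->
  pow2_special (k + (sumn t).*2) (nseq k 1 ++ map double t) =
  pow2_special (sumn t) t && ~~ ((k == 0) && (t == nseq (sumn t) 1)).
Proof.
move=> n0; rewrite !pow2_specialE part_f pow2_f.
case Hp: is_partition; case Ha: all; rewrite ?andbF //= sp_f //.
Qed.

Lemma cnt1 k t : count_mem 1 (nseq k 1 ++ map double t) = k.
Proof.
rewrite count_cat count_nseq /= mul1n count_map.
rewrite (eq_count (a2 := pred0)) ?count_pred0 ?addn0 // => x /=.
by apply/negbTE/eqP => /(congr1 odd); rewrite odd_double.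
Qed.

Lemma c_rec n : 0 < n -> num_partitions pow2_special n =
  sumn [seq count (fun t => pow2_special m t && ((m.*2 != n) || (t != nseq m 1)))
          (candidates m) | m <- iota 0 (n./2).+1].
Proof.
move=> n0; rewrite -(countPL n (fun m t => pow2_special m t && ((m.*2 != n) || (t != nseq m 1)))).
symmetry; apply: (@count_bij _ _ _ _ _ _ (fun x => nseq (n - x.1.*2) 1 ++ map double x.2)).
- exact: uniqPL.
- exact: uniq_candidates.
- move=> [m t] [m' t']; rewrite !memPL /= => /andP[Hm _] /andP[Hm' _] _ _ E.
  have Em : m = m' by have := congr1 (count_mem 1) E; rewrite !cnt1; lia.
  subst m'; congr pair; move/eqP: E; rewrite eqseq_cat ?size_nseq // eqxx /=.
  by move/eqP/inj_map; apply; exact: double_inj.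
- move=> [m t]; rewrite memPL /= => /andP[Hm _] /andP[Hsp Hex].
  have Ht : sumn t = m by move: Hsp; rewrite pow2_specialE => /and3P[/and3P[_ _ /eqP]].
  have := spec_f (n - m.*2) t; rewrite Ht subnK // => /(_ n0) E.
  have Hs : pow2_special n (nseq (n - m.*2) 1 ++ map double t).
    by rewrite E Hsp /=; apply/negP => /andP[/eqP E1 /eqP E2]; move: Hex; rewrite E2 eqxx orbF; apply/negP/negPn/eqP; lia.
  rewrite Hs partition_cand //; by move: Hs; rewrite pow2_specialE => /andP[].
- move=> s _ Hs; move: (Hs); rewrite pow2_specialE => /and3P[Hp Ha _].
  move: (Hp) => /and3P[Hso Hpos /eqP Hn].
  have Hd := dec _ Hso Hpos Ha.
  set k := count_mem 1 s in Hd; set t := map half _ in Hd.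
  have En : n = k + (sumn t).*2 by rewrite -Hn {1}Hd sumn_cat sumn_nseq mul1n sumn_double.
  have := spec_f k t; rewrite -En -Hd => /(_ n0); rewrite Hs => /esym /andP[Ht Hex].
  exists (sumn t, t); last by rewrite /= {1}Hd; congr cat; congr nseq; lia.
  apply/and3P; split => //=.
    rewrite memPL /= partition_cand ?andbT; first by lia.
    by move: Ht; rewrite pow2_specialE => /andP[].
  rewrite -negb_and; apply/negP => /andP[/eqP E1 /eqP E2]; move: Hex; rewrite -E2 eqxx andbT.
  by apply/negPn/eqP; lia.
Qed.

Theorem mainTheorem4 (n : nat) :
  b n = num_partitions pow2_special n.
Proof.
elim/ltn_ind: n => n IH.
case: (posnP n) => [->|n0]; first by [].
rewrite b_rec // c_rec //; congr sumn; apply/eq_in_map => m.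
rewrite mem_iota leq0n andTb add0n ltnS geq_half_double => Hm.
have mn : m < n by lia.
case: (eqVneq (m.*2) n) => [E|E].
  have m0 : 0 < m by lia.
  rewrite [LHS](eq_count (a2 := fun r => ns_distinct m r && (r != [:: m]))) => [|r]; last by [].
  rewrite [RHS](eq_count (a2 := fun r => pow2_special m r && (r != nseq m 1))) => [|r]; last by [].
  rewrite (count_excl _ _ _ _ (uniq_candidates m)) (count_excl _ _ _ _ (uniq_candidates m)).
  have := IH m mn; rewrite /b /num_partitions => ->; congr subn.
  have -> : ns_distinct m [:: m].
    by rewrite /ns_distinct /is_partition /non_squashing /= addn0 m0 eqxx.
  have -> : pow2_special m (nseq m 1).
    rewrite pow2_specialE /is_partition !all_nseq /= sumn_nseq mul1n eqxx !orbT /=.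
    rewrite /sp all_nseq eqxx orbT andbT.
    by rewrite -(cats0 (nseq m 1)) nseq_sorted.
  by rewrite !mem_candidates /= size_nseq leqnn all_nseq /= m0 leqnn ltnS m0 orbT.
transitivity (count (ns_distinct m) (candidates m)).
  by apply: eq_count => r; rewrite andbT.
transitivity (count (pow2_special m) (candidates m)); last first.
  by apply: eq_count => r; rewrite andbT.
exact: IH.
Qed.
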